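(* Let $X$ be a Banach algebra with unit element $\mathbf{1}$. Suppose $h:X\to X$ satisfies $$\|h(xyx)-h(x)yx-xh(y)x-xyh(x)\|\le\theta(\|x\|^p+\|y\|^q+\|x\|^r\|y\|^s),$$ $$\|h(x+y)-h(x)-h(y)\|\le\theta(\|x\|^p+\|y\|^q+\|x\|^r\|y\|^s)$$ for all $x,y\in X$, for some constants $\theta,p,q,r,s\in(0,1)$ with $r+s<1$. Then $h$ is a Jordan triple derivation.
   Context: A Jordan triple derivation on an algebra $X$ is an additive map $D:X\to X$ with $D(xyx)=D(x)yx+xD(y)x+xyD(x)$ for all $x,y\in X$. *)

(* Defs.v *)
From HB Require Import structures.
From mathcomp Require Import all_boot all_order all_algebra.
From mathcomp Require Import all_classical all_reals all_analysis.
Set Implicit Arguments. Unset Strict Implicit. Unset Printing Implicit Defensive.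
Import Order.TTheory GRing.Theory Num.Theory.
Import numFieldNormedType.Exports.
Local Open Scope ring_scope.

(* A unital real Banach algebra structure on a real Banach space V:
   a multiplication [mul] and a unit [one] making V an associative unital
   R-algebra, with submultiplicative norm and `|one| = 1.
   (A complex Banach algebra is in particular a real Banach algebra by
   restriction of scalars, so this covers both cases.) *)
Record banach_algebra (R : realType) (V : completeNormedModType R)
    (mul : V -> V -> V) (one : V) : Prop := BanachAlgebra {
  ba_mulA : forall x y z, mul x (mul y z) = mul (mul x y) z ;
  ba_mul1l : forall x, mul one x = x ;
  ba_mul1r : forall x, mul x one = x ;
  ba_mulDl : forall x y z, mul (x + y) z = mul x z + mul y z ;
  ba_mulDr : forall x y z, mul x (y + z) = mul x y + mul x z ;
  ba_scalerAl : forall (a : R) x y, mul (a *: x) y = a *: mul x y ;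
  ba_scalerAr : forall (a : R) x y, mul x (a *: y) = a *: mul x y ;
  ba_normM : forall x y, `|mul x y| <= `|x| * `|y| ;
  ba_norm1 : `|one| = 1
}.

Definition jordan_triple_derivation (V : zmodType) (mul : V -> V -> V)
    (D : V -> V) : Prop :=
  (forall x y, D (x + y) = D x + D y) /\
  (forall x y, D (mul (mul x y) x)
      = mul (mul (D x) y) x + mul (mul x (D y)) x + mul (mul x y) (D x)).

(* Main.v *)
Require Import Defs.
From HB Require Import structures.
From mathcomp Require Import all_boot all_order all_algebra.
From mathcomp Require Import all_classical all_reals all_analysis.
From mathcomp Require Import lra.
Import Order.TTheory GRing.Theory Num.Theory.
Import numFieldNormedType.Exports.
Local Open Scope ring_scope.
Set Implicit Arguments. Unset Strict Implicit.

Lemma growth (R : realType) (a K g : R) : g < 1 ->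
  (forall n : nat, (0 < n)%N -> (n%:R ^+ 2) * a <= K * (n%:R ^+ 2) `^ g) -> a <= 0.
Proof.
move=> g1 H; rewrite leNgt; apply/negP => a0.
set t := `|K| / a.
have t0 : 0 <= t by rewrite /t divr_ge0 // ltW.
have ta : t * a = `|K| by rewrite /t divfK // gt_eqF.
set M := t + 1.
set T := expR (M / (1 - g)).
have [k hk] : exists k : nat, T < k%:R by exists (Num.Def.archi_bound T); exact: archi_boundP (expR_ge0 _).
have := H k.+1 isT.
set d := (k.+1)%:R ^+ 2.
have kd : k%:R <= d.
  have : k%:R <= (k.+1)%:R :> R by rewrite ler_nat.
  have : 1 <= (k.+1)%:R :> R by rewrite ler1n.
  rewrite /d; nra.
have T0 : 0 < T by rewrite /T expR_gt0.
have d0 : 0 < d by apply: (Order.PreorderTheory.lt_le_trans (lt_trans T0 hk) kd).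
have lnd : M / (1 - g) <= ln d.
  rewrite -[X in X <= _]expRK ler_ln ?posrE // ?expR_gt0 //.
  exact: ltW (Order.PreorderTheory.lt_le_trans hk kd).
have pd : expR M <= d `^ (1 - g).
  rewrite /powR (gt_eqF d0) ler_expR.
  have g0 : 0 < 1 - g by rewrite subr_gt0.
  have := ler_wpM2l (ltW g0) lnd.
  by rewrite mulrCA divff ?gt_eqF // mulr1.
have eM := expR_ge1Dx M.
have dsplit : d = d `^ g * d `^ (1 - g).
  rewrite -powRD; last by rewrite (gt_eqF d0) implybT.
  by rewrite addrC subrK powRr1 // ltW.
have pg : 0 < d `^ g by rewrite powR_gt0.
have lK : K <= `|K| := ler_norm K.
have : `|K| < d `^ (1 - g) * a.
  rewrite -ta ltr_pM2r //. rewrite /M in eM; lra.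
move=> h1 h2.
have : d `^ g * `|K| < d `^ g * (d `^ (1 - g) * a) by rewrite ltr_pM2l.
rewrite mulrA -dsplit.
have : K * d `^ g <= d `^ g * `|K| by rewrite mulrC ler_pM2l.
lra.
Qed.

Lemma IL2 (V: zmodType) (a1 a2 b1 b2 : V) : (a1 - a2) - (b1 - b2) = (a1 - b1) - (a2 - b2).
Proof. by rewrite opprD opprK addrACA opprB; congr (_ + _); rewrite addrC. Qed.
Lemma IL3 (V: zmodType) (a1 a2 b1 b2 c1 c2 : V) :
  (a1 - a2) - (b1 - b2) - (c1 - c2) = (a1 - b1 - c1) - (a2 - b2 - c2).
Proof. by rewrite (IL2 a1 a2 b1 b2) (IL2 (a1 - b1)). Qed.
Lemma zid (V : zmodType) (H1 H2 H3 M1 M2 M3 N1 N2 N3 k1 k2 k3 : V) :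
  M1 - M2 - M3 = 0 -> N1 - N2 - N3 = 0 ->
 k1 - k2 - k3 = (H1 - H2 - H3) - ((H1 - M1 - k1 - N1) - (H2 - M2 - k2 - N2) - (H3 - M3 - k3 - N3)).
Proof.
move=> hM hN.
rewrite (IL3 (H1 - M1 - k1)) hN subr0 (IL3 (H1 - M1)) (IL3 H1) hM subr0.
by rewrite opprB addrCA subrr addr0. Qed.

Lemma pw1 (R : realType) (c e g : R) : 1 <= c -> e <= g -> 0 <= g ->
  c `^ e <= (c ^+ 2) `^ g.
Proof.
move=> c1 eg g0.
apply: (le_trans (ler_powR c1 eg)).
apply: ge0_ler_powR => //; rewrite ?nnegrE.
- by apply: le_trans c1.
- by rewrite exprn_ge0 // (le_trans _ c1).
- by rewrite expr2 ler_peMl // (le_trans _ c1).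
Qed.

Lemma pw0 (R : realType) (c g : R) : 1 <= c -> 0 <= g -> 1 <= (c ^+ 2) `^ g.
Proof.
move=> c1 g0; rewrite -(powRr0 (c ^+ 2)); apply: ler_powR => //.
by rewrite expr2 (le_trans c1) // ler_peMl // (le_trans _ c1).
Qed.

Lemma comb (R : realType) (t A1 A2 A3 a1 a2 a3 D : R) : 0 <= t ->
  0 <= a1 -> 0 <= a2 -> 0 <= a3 -> A1 <= D -> A2 <= D -> A3 <= D ->
  t * (A1 * a1 + A2 * a2 + A3 * a3) <= t * (a1 + a2 + a3) * D.
Proof.
move=> t0 a10 a20 a30 h1 h2 h3; rewrite -mulrA; apply: ler_wpM2l => //.
rewrite !mulrDl; apply: lerD; first apply: lerD.
all: by rewrite mulrC; apply: ler_wpM2l.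
Qed.


Unset Implicit Arguments. Set Strict Implicit.

Theorem corollary2p4 (R : realType) (X : completeNormedModType R)
    (mul : X -> X -> X) (one : X) (hX : banach_algebra mul one)
    (h : X -> X) (theta p q r s : R)
    (htheta : 0 < theta < 1) (hp : 0 < p < 1) (hq : 0 < q < 1)
    (hr : 0 < r < 1) (hs : 0 < s < 1) (hrs : r + s < 1)
    (h1 : forall x y : X,
        `|h (mul (mul x y) x) - mul (mul (h x) y) x - mul (mul x (h y)) x
            - mul (mul x y) (h x)|
          <= theta * (`|x| `^ p + `|y| `^ q + `|x| `^ r * `|y| `^ s))
    (h2 : forall x y : X,
        `|h (x + y) - h x - h y|
          <= theta * (`|x| `^ p + `|y| `^ q + `|x| `^ r * `|y| `^ s)) :
  jordan_triple_derivation mul h.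
Proof.
case/andP: htheta => th0 th1; case/andP: hp => p0 p1; case/andP: hq => q0 q1.
case/andP: hr => r0 r1; case/andP: hs => s0 s1.
pose G := Num.max p (Num.max q (r + s)).
have G1 : G < 1 by rewrite /G !gt_max p1 q1 hrs.
have pG : p <= G by rewrite /G le_max lexx.
have qG : q <= G by rewrite /G !le_max lexx orbT.
have rsG : r + s <= G by rewrite /G !le_max lexx !orbT.
have rG : r <= G by apply: le_trans rsG; lra.
have G0 : 0 <= G by apply: le_trans pG; lra.
have h0 : h 0 = 0.
  have := h2 0 0.
  rewrite normr0 !powR0 ?gt_eqF // mul0r !addr0 mulr0 subrr sub0r normrN normr_le0.
  by move/eqP.
have hadd : forall x y, h (x + y) = h x + h y.
  move=> x y.
  suff : `|h (x + y) - h x - h y| <= 0.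
    by rewrite normr_le0 subr_eq0 subr_eq [h y + _]addrC => /eqP.
  set K := theta * (`|x| `^ p + `|y| `^ q + `|x| `^ r * `|y| `^ s)
    + theta * (1 + `|x + y| `^ q + `|x + y| `^ s)
    + theta * (1 + `|x| `^ q + `|x| `^ s)
    + theta * (1 + `|y| `^ q + `|y| `^ s).
  apply: (growth (K := K) G1) => n n0.
  set c := n%:R.
  have c1 : 1 <= c by rewrite /c ler1n.
  have c0 : 0 <= c by apply: le_trans c1.
  have cpos : 0 < c by rewrite /c ltr0n.
  have c21 : 1 <= c ^+ 2 by rewrite expr2 (le_trans c1) // ler_peMl // (le_trans _ c1).
  have c2nz : c ^+ 2 != 0 by rewrite expf_eq0 /= (gt_eqF cpos).
  set D := (c ^+ 2) `^ G.
  set e := c *: one.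
  set u := h e.
  have ne : `|e| = c by rewrite normrZ (ba_norm1 hX) mulr1 ger0_norm.
  have m1 z : mul (mul e z) e = c ^+ 2 *: z.
    by rewrite !(ba_scalerAl hX, ba_scalerAr hX) (ba_mul1l hX) (ba_mul1r hX) scalerA expr2.
  have m2 z : mul (mul u z) e = c *: mul u z.
    by rewrite (ba_scalerAr hX) (ba_mul1r hX).
  have m3 z : mul (mul e z) u = c *: mul z u.
    by rewrite (ba_scalerAl hX) (ba_mul1l hX) (ba_scalerAl hX).
  have HF z : `|h (c ^+ 2 *: z) - c *: mul u z - c ^+ 2 *: h z - c *: mul z u|
      <= theta * (1 + `|z| `^ q + `|z| `^ s) * D.
    have := h1 e z; rewrite m1 m1 m2 m3 ne => /le_trans; apply.
    have -> : c `^ p + `|z| `^ q + c `^ r * `|z| `^ s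
        = c `^ p * 1 + 1 * `|z| `^ q + c `^ r * `|z| `^ s by rewrite mulr1 mul1r.
    apply: comb; rewrite ?powR_ge0 ?(ltW th0) //.
    - exact: pw1 c1 pG G0.
    - exact: pw0 c1 G0.
    - exact: pw1 c1 rG G0.
  have HE : `|h (c ^+ 2 *: x + c ^+ 2 *: y) - h (c ^+ 2 *: x) - h (c ^+ 2 *: y)|
      <= theta * (`|x| `^ p + `|y| `^ q + `|x| `^ r * `|y| `^ s) * D.
    have c20 : 0 <= c ^+ 2 by rewrite exprn_ge0.
    have := h2 (c ^+ 2 *: x) (c ^+ 2 *: y); move=> /le_trans; apply.
    have nz v : `|c ^+ 2 *: v| = c ^+ 2 * `|v|.
      by rewrite normrZ (ger0_norm c20).
    rewrite !nz (powRM _ c20 (normr_ge0 x)) (powRM _ c20 (normr_ge0 y)) (powRM _ c20 (normr_ge0 x)) (powRM _ c20 (normr_ge0 y)).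
    rewrite mulrACA -powRD; last by rewrite c2nz implybT.
    apply: comb; rewrite ?powR_ge0 ?mulr_ge0 ?powR_ge0 ?(ltW th0) //.
    - exact: ler_powR c21 _ _ pG.
    - exact: ler_powR c21 _ _ qG.
    - exact: ler_powR c21 _ _ rsG.
  have Hid := @zid _ (h (c ^+ 2 *: (x + y))) (h (c ^+ 2 *: x)) (h (c ^+ 2 *: y))
    (c *: mul u (x + y)) (c *: mul u x) (c *: mul u y)
    (c *: mul (x + y) u) (c *: mul x u) (c *: mul y u)
    (c ^+ 2 *: h (x + y)) (c ^+ 2 *: h x) (c ^+ 2 *: h y).
  rewrite -!scalerBr in Hid.
  rewrite -(ger0_norm (exprn_ge0 2 c0)) -normrZ Hid; first last.
  - by rewrite (ba_mulDl hX) addrAC addrK subrr scaler0.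
  - by rewrite (ba_mulDr hX) addrAC addrK subrr scaler0.
  rewrite scalerDr.
  apply: (le_trans (ler_normB _ _)).
  have Fxy := HF (x + y); rewrite scalerDr in Fxy.
  apply: le_trans (lerD (lexx _) (le_trans (ler_normB _ _) (lerD (le_trans (ler_normB _ _) (lerD Fxy (HF _))) (HF _)))) _.
  have := HE; rewrite /K !mulrDl; lra.
split => //.
have hnat n z : h (z *+ n) = h z *+ n.
  elim: n => [|n IH]; first by rewrite !mulr0n h0.
  by rewrite !mulrS hadd IH.
have hZ n z : h (n%:R *: z) = n%:R *: h z by rewrite !scaler_nat hnat.
have sw (a b c : X) : a + b + c = c + b + a by rewrite addrC [a + b]addrC addrA.
move=> x y.
suff : `|h (mul (mul x y) x) - mul (mul (h x) y) x - mul (mul x (h y)) x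
    - mul (mul x y) (h x)| <= 0.
  by rewrite normr_le0 subr_eq0 !subr_eq => /eqP ->; apply: sw.
apply: (growth (K := theta * (`|x| `^ p + `|y| `^ q + `|x| `^ r * `|y| `^ s)) G1) => n n0.
have c1 : 1 <= n%:R :> R by rewrite ler1n.
have c0 : 0 <= n%:R :> R by apply: le_trans c1.
have := h1 (n%:R *: x) y.
rewrite !hZ !(ba_scalerAl hX, ba_scalerAr hX) !scalerA -natrM hZ -!scalerBr.
rewrite normrZ normr_nat natrM -expr2 => /le_trans; apply.
rewrite normrZ normr_nat !(powRM _ c0 (normr_ge0 x)).
have -> : n%:R `^ p * `|x| `^ p + `|y| `^ q + n%:R `^ r * `|x| `^ r * `|y| `^ s
  = n%:R `^ p * `|x| `^ p + 1 * `|y| `^ q + n%:R `^ r * (`|x| `^ r * `|y| `^ s).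
  by rewrite mul1r mulrA.
apply: comb; rewrite ?powR_ge0 ?mulr_ge0 ?powR_ge0 ?(ltW th0) //.
- exact: pw1 c1 pG G0.
- exact: pw0 c1 G0.
- exact: pw1 c1 rG G0.
Qed.
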